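(* Let $\mathbb{X}$ be a reflexive real Banach space and $\mathbb{Y}$ a smooth real Banach space (both of dimension greater than $1$). Let $T\in\mathbb{K}(\mathbb{X},\mathbb{Y})$ with $\|T\|=1$. Suppose that for every $\epsilon>0$, $T$ admits a uniform $\epsilon$-BPB approximation $A_\epsilon\in\mathbb{K}(\mathbb{X},\mathbb{Y})$ with $A_\epsilon\neq T$ which is a smooth point of $\mathbb{K}(\mathbb{X},\mathbb{Y})$. Then $T$ is a smooth point of $\mathbb{K}(\mathbb{X},\mathbb{Y})$.
   Context: $\mathbb{K}(\mathbb{X},\mathbb{Y})$ (resp. $\mathbb{L}(\mathbb{X},\mathbb{Y})$) denotes the compact (resp. bounded) linear operators with the operator norm; $S_{\mathbb{X}}$ is the unit sphere. A nonzero element $x$ of a Banach space $\mathbb{Z}$ is a smooth point if there is a unique $f\in\mathbb{Z}^*$ with $\|f\|=1$ and $f(x)=\|x\|$; $\mathbb{Y}$ is smooth if all its nonzero points are smooth. For $T$ with $\|T\|=1$ and fixed $\epsilon>0$, an operator $A\in\mathbb{L}(\mathbb{X},\mathbb{Y})$ with $\|A\|=1$ is a uniform $\epsilon$-BPB approximation of $T$ if there exists $\delta(\epsilon)>0$ such that whenever $x_0\in S_{\mathbb{X}}$ satisfies $\|Tx_0\|>1-\delta(\epsilon)$, there exists $u_0\in S_{\mathbb{X}}$ with $\|Au_0\|=1$, $\|u_0-x_0\|<\epsilon$ and $\|A-T\|<\epsilon$. *)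

(* Defs.v *)
From HB Require Import structures.
From mathcomp Require Import all_boot all_order all_algebra.
From mathcomp Require Import all_classical all_reals all_analysis.
Set Implicit Arguments. Unset Strict Implicit. Unset Printing Implicit Defensive.
Import Order.TTheory GRing.Theory Num.Theory.
Import numFieldNormedType.Exports.
Local Open Scope classical_set_scope.
Local Open Scope ring_scope.

Section Defs.
Variable R : realType.

Definition cball1 {V : normedModType R} : set V := [set v : V | `|v| <= 1].

Definition dual_elt (V : normedModType R) (g : V -> R) : Prop :=
  (forall (a : R) (u v : V), g (a *: u + v) = a * g u + g v) /\
  exists C : R, forall v : V, `|g v| <= C * `|v|.

Definition fnorm (V : normedModType R) (g : V -> R) : R :=
  sup [set `|g v| | v in @cball1 V].

Definition smooth_pt (V : normedModType R) (y : V) : Prop :=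
  y != 0 /\ exists! g : V -> R, dual_elt g /\ fnorm g = 1 /\ g y = `|y|.

Definition smooth_space (V : normedModType R) : Prop :=
  forall y : V, y != 0 -> smooth_pt y.

(* reflexivity: the canonical embedding J : V -> V^** is surjective.
   An element of V^** is a bounded linear functional on V^*. *)
Definition reflexive_space (V : normedModType R) : Prop :=
  forall phi : (V -> R) -> R,
    (forall (a : R) (g h : V -> R), dual_elt g -> dual_elt h ->
        phi (fun v => a * g v + h v) = a * phi g + phi h) ->
    (exists C : R, forall g, dual_elt g -> `|phi g| <= C * fnorm g) ->
    exists x : V, forall g, dual_elt g -> phi g = g x.

Definition dim_gt1 (V : normedModType R) : Prop :=
  exists u v : V, forall a b : R, a *: u + b *: v = 0 -> a = 0 /\ b = 0.

Section Ops.
Variables X Y : normedModType R.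

Definition lin_op (f : X -> Y) : Prop :=
  forall (a : R) (u v : X), f (a *: u + v) = a *: f u + f v.

Definition opnorm (f : X -> Y) : R := sup [set `|f x| | x in @cball1 X].

Definition compact_op (f : X -> Y) : Prop :=
  lin_op f /\ compact (closure (f @` @cball1 X)).

Definition K_dual_elt (Phi : (X -> Y) -> R) : Prop :=
  (forall (a : R) (A B : X -> Y), compact_op A -> compact_op B ->
      Phi (fun x => a *: A x + B x) = a * Phi A + Phi B) /\
  exists C : R, forall A, compact_op A -> `|Phi A| <= C * opnorm A.

Definition K_dualnorm (Phi : (X -> Y) -> R) : R :=
  sup [set `|Phi A| | A in [set A | compact_op A /\ opnorm A <= 1]].

Definition K_support (T : X -> Y) (Phi : (X -> Y) -> R) : Prop :=
  K_dual_elt Phi /\ K_dualnorm Phi = 1 /\ Phi T = opnorm T.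

Definition smooth_point_K (T : X -> Y) : Prop :=
  compact_op T /\ T <> (fun _ => 0) /\
  (exists Phi, K_support T Phi) /\
  (forall Phi1 Phi2, K_support T Phi1 -> K_support T Phi2 ->
     forall A, compact_op A -> Phi1 A = Phi2 A).

Definition unif_BPB_approx (eps : R) (T A : X -> Y) : Prop :=
  lin_op A /\ (exists C : R, forall x, `|A x| <= C * `|x|) /\ opnorm A = 1 /\
  exists delta : R, 0 < delta /\
    forall x0 : X, `|x0| = 1 -> 1 - delta < `|T x0| ->
      exists u0 : X, `|u0| = 1 /\ `|A u0| = 1 /\ `|u0 - x0| < eps /\
        opnorm (fun x => A x - T x) < eps.
End Ops.
End Defs.

(* Main.v *)
Require Import Defs.
From HB Require Import structures.
From mathcomp Require Import all_boot all_order all_algebra.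
From mathcomp Require Import all_classical all_reals all_analysis.
From mathcomp Require Import ring lra.
Import Order.TTheory GRing.Theory Num.Theory.
Import numFieldNormedType.Exports.
Local Open Scope classical_set_scope.
Local Open Scope ring_scope.
Set Implicit Arguments. Unset Strict Implicit. Unset Printing Implicit Defensive.

Section Basic.
Variable R : realType.

Section Lin.
Variables X Y : normedModType R.
Variable f : X -> Y.
Hypothesis hf : lin_op f.

Lemma lin0 : f 0 = 0.
Proof.
have := hf 1 0 0; rewrite !scale1r addr0 => H.
by have := congr1 (fun z => z - f 0) H; rewrite subrr addrK.
Qed.
Lemma linD u v : f (u + v) = f u + f v.
Proof. by have := hf 1 u v; rewrite !scale1r. Qed.
Lemma linZ a u : f (a *: u) = a *: f u.
Proof. by have := hf a u 0; rewrite !addr0 lin0 addr0. Qed.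
Lemma linN u : f (- u) = - f u.
Proof. by rewrite -scaleN1r linZ scaleN1r. Qed.
Lemma linB u v : f (u - v) = f u - f v.
Proof. by rewrite linD linN. Qed.
End Lin.

Section Dual.
Variable V : normedModType R.
Variable g : V -> R.
Hypothesis hg : forall (a : R) (u v : V), g (a *: u + v) = a * g u + g v.
Lemma dl0 : g 0 = 0.
Proof.
have := hg 1 0 0; rewrite scale1r addr0 mul1r => H.
by have := congr1 (fun z => z - g 0) H; rewrite subrr addrK.
Qed.
Lemma dlD u v : g (u + v) = g u + g v.
Proof. by have := hg 1 u v; rewrite !scale1r mul1r. Qed.
Lemma dlZ a u : g (a *: u) = a * g u.
Proof. by have := hg a u 0; rewrite !addr0 dl0 addr0. Qed.
Lemma dlN u : g (- u) = - g u.
Proof. by rewrite -scaleN1r dlZ mulN1r. Qed.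
Lemma dlB u v : g (u - v) = g u - g v.
Proof. by rewrite dlD dlN. Qed.
End Dual.

Lemma bounded_set_ex (V : normedModType R) (A : set V) :
  bounded_set A -> exists M : R, 0 <= M /\ forall y, A y -> `|y| <= M.
Proof.
move=> [M0 [M0r HM]].
exists (`|M0| + 1); split; first by rewrite addr_ge0.
apply: HM.
by rewrite (le_lt_trans (real_ler_norm M0r)) // ltrDl.
Qed.


Section Ops2.
Variables X Y : normedModType R.

Lemma op_bdd (B : X -> Y) : compact_op B ->
  exists M : R, 0 <= M /\ forall x : X, `|x| <= 1 -> `|B x| <= M.
Proof.
move=> [_ cB]; have [M [M0 HM]] := bounded_set_ex (compact_bounded cB).
exists M; split => // x x1; apply: HM; apply: subset_closure; by exists x.
Qed.

Lemma op_hassup (B : X -> Y) : compact_op B ->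
  has_sup [set `|B x| | x in @cball1 R X].
Proof.
move=> cB; have [M [M0 HM]] := op_bdd cB; split.
  by exists `|B 0|, 0 => //; rewrite /cball1 /= normr0.
by exists M => _ [x x1 <-]; apply: HM.
Qed.

Lemma op_le1 (B : X -> Y) x : compact_op B -> `|x| <= 1 -> `|B x| <= opnorm B.
Proof.
move=> cB x1; have := sup_upper_bound (op_hassup cB); apply; by exists x.
Qed.

Lemma opnorm_ge0 (B : X -> Y) : compact_op B -> 0 <= opnorm B.
Proof. move=> cB; apply: le_trans (normr_ge0 (B 0)) (@op_le1 B 0 cB _); by rewrite normr0. Qed.

Lemma op_le (B : X -> Y) x : compact_op B -> `|B x| <= opnorm B * `|x|.
Proof.
move=> cB; have hB := cB.1.
have [->|x0] := eqVneq x 0; first by rewrite (lin0 hB) !normr0 mulr0.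
have nx : 0 < `|x| by rewrite normr_gt0.
have -> : x = `|x| *: (`|x|^-1 *: x) by rewrite scalerA divff ?scale1r // gt_eqF.
rewrite (linZ hB) !normrZ normr_id mulrCA ler_wpM2l //.
rewrite normfV normr_id mulVf ?gt_eqF // mulr1.
by apply: op_le1 => //; rewrite normrZ normfV normr_id mulVf ?gt_eqF.
Qed.

Lemma opnorm_le (B : X -> Y) (M : R) :
  (forall x : X, `|x| <= 1 -> `|B x| <= M) -> opnorm B <= M.
Proof.
move=> HM; apply: ge_sup.
  by exists `|B 0|, 0 => //; rewrite /cball1 /= normr0.
by move=> _ [x x1 <-]; apply: HM.
Qed.
End Ops2.

Section Dual2.
Variable V : normedModType R.

Lemma fnorm_le (g : V -> R) (M : R) :
  (forall y : V, `|y| <= 1 -> `|g y| <= M) -> fnorm g <= M.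
Proof.
move=> HM; apply: ge_sup.
  by exists `|g 0|, 0 => //; rewrite /cball1 /= normr0.
by move=> _ [x x1 <-]; apply: HM.
Qed.

Lemma dual_le1 (g : V -> R) y : dual_elt g -> `|y| <= 1 -> `|g y| <= fnorm g.
Proof.
move=> [hg [C HC]] y1; apply: (sup_upper_bound); last by exists y.
split; first by exists `|g 0|, 0 => //; rewrite /cball1 /= normr0.
exists `|C|; move=> _ [x x1 <-]; apply: le_trans (HC x) _.
apply: le_trans (ler_norm _) _; rewrite normrM normr_id.
by rewrite -{2}(mulr1 `|C|) ler_wpM2l.
Qed.
End Dual2.

Section Dual3.
Variable V : normedModType R.
Lemma dual_le (g : V -> R) y : dual_elt g -> `|g y| <= fnorm g * `|y|.
Proof.
move=> dg; have hg := dg.1.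
have [->|x0] := eqVneq y 0; first by rewrite (dl0 hg) !normr0 mulr0.
have nx : 0 < `|y| by rewrite normr_gt0.
have -> : y = `|y| *: (`|y|^-1 *: y) by rewrite scalerA divff ?scale1r // gt_eqF.
rewrite (dlZ hg) normrM normr_id normrZ normr_id mulrCA ler_wpM2l //.
have u1 : `| `|y|^-1 *: y| = 1 by rewrite normrZ normfV normr_id mulVf ?gt_eqF.
by rewrite u1 mulr1; apply: dual_le1 => //; rewrite u1.
Qed.
End Dual3.

Section Compact.
Variables X Y : normedModType R.

Lemma rank1_compact (f : X -> R) (y : Y) (m : R) :
  (forall (a : R) (u v : X), f (a *: u + v) = a * f u + f v) ->
  (forall x : X, `|x| <= 1 -> `|f x| <= m) ->
  compact_op (fun x => f x *: y).
Proof.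
move=> hf hm; split.
  by move=> a u v /=; rewrite hf scalerDl scalerA.
set K := (fun r : R => r *: y) @` `[-m, m].
have cK : compact K.
  apply: continuous_compact; last exact: segment_compact.
  apply: continuous_subspaceT => r; exact: scalel_continuous.
apply: (subclosed_compact (@closed_closure _ _) cK).
have -> : K = closure K by apply/closure_id; apply: compact_closed cK; exact: norm_hausdorff.
apply: closureS => _ [x x1 <-]; exists (f x) => //.
by rewrite /= in_itv /= -ler_norml hm.
Qed.

Lemma sum_compact (A B : X -> Y) (a : R) :
  compact_op A -> compact_op B -> compact_op (fun x => a *: A x + B x).
Proof.
move=> [hA cA] [hB cB]; split.
  move=> c u v /=; rewrite hA hB !scalerDr !scalerA mulrC.
  by rewrite addrACA.
set K := (fun p : Y * Y => a *: p.1 + p.2) @`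
   (closure [set A x | x in @cball1 R X] `*` closure [set B x | x in @cball1 R X]).
have cK : compact K.
  apply: continuous_compact; last exact: compact_setX.
  apply: continuous_subspaceT => p.
  apply: (@continuousD _ _ _ (fun q : Y * Y => a *: q.1) snd).
    apply: continuousZ; [exact: cvg_cst | exact: cvg_fst].
  exact: cvg_snd.
apply: (subclosed_compact (@closed_closure _ _) cK).
have -> : K = closure K by apply/closure_id; apply: compact_closed cK; exact: norm_hausdorff.
apply: closureS => _ [x x1 <-]; exists (A x, B x) => //.
by split; apply: subset_closure; exists x.
Qed.
End Compact.

Section Supp.
Variables X Y : normedModType R.

Definition Kset (Phi : (X -> Y) -> R) :=
  [set `|Phi A| | A in [set A : X -> Y | compact_op A /\ opnorm A <= 1]].

Lemma Phi_le (Phi : (X -> Y) -> R) (D : X -> Y) :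
  K_dual_elt Phi -> K_dualnorm Phi = 1 -> compact_op D -> `|Phi D| <= opnorm D.
Proof.
move=> [lin [C0 HC]] n1 cD.
have hs : has_sup (Kset Phi).
  split.
    exists `|Phi (fun x => (-1) *: D x + D x)|, (fun x => (-1) *: D x + D x) => //.
    split; first exact: sum_compact.
    by apply: opnorm_le => x _; rewrite scaleN1r addNr normr0.
  exists `|C0| => _ [A [cA nA] <-].
  apply: le_trans (HC A cA) _; apply: le_trans (ler_norm _) _.
  rewrite normrM (ger0_norm (opnorm_ge0 cA)).
  by rewrite -{2}(mulr1 `|C0|) ler_wpM2l.
have oD := opnorm_ge0 cD.
have [z|nz] := eqVneq (opnorm D) 0.
  apply: le_trans (HC D cD) _; by rewrite z mulr0.
have k0 : 0 < (opnorm D)^-1 by rewrite invr_gt0 lt_def nz.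
set D' := (fun x => ((opnorm D)^-1 - 1) *: D x + D x).
have eD : forall x, D' x = (opnorm D)^-1 *: D x.
  by move=> x; rewrite /D' scalerBl scale1r subrK.
have cD' : compact_op D' by exact: sum_compact.
have nD' : opnorm D' <= 1.
  apply: opnorm_le => x x1; rewrite eD normrZ (ger0_norm (ltW k0)).
  rewrite -(mulVf nz) ler_wpM2l ?(ltW k0) //.
  by apply: op_le1.
have : `|Phi D'| <= 1.
  rewrite -n1; apply: (sup_upper_bound hs); by exists D'.
rewrite /D' lin //.
have -> : ((opnorm D)^-1 - 1) * Phi D + Phi D = (opnorm D)^-1 * Phi D by rewrite mulrBl mul1r subrK.
rewrite normrM.
rewrite (ger0_norm (ltW k0)) => H.
by rewrite -(ler_pM2l k0) mulVf.
Qed.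

Lemma mk_support (A : X -> Y) (Phi : (X -> Y) -> R) :
  compact_op A -> opnorm A = 1 ->
  (forall (a : R) (A1 B1 : X -> Y), compact_op A1 -> compact_op B1 ->
      Phi (fun x => a *: A1 x + B1 x) = a * Phi A1 + Phi B1) ->
  (forall B, compact_op B -> `|Phi B| <= opnorm B) ->
  Phi A = 1 -> K_support A Phi.
Proof.
move=> cA nA lin bnd PA.
have ub : ubound (Kset Phi) 1.
  by move=> _ [B [cB nB] <-]; apply: le_trans (bnd B cB) nB.
have ne : Kset Phi !=set0 by exists `|Phi A|, A => //; split => //; rewrite nA.
split; first by split => //; exists 1 => B cB; rewrite mul1r; apply: bnd.
split; last by rewrite PA nA.
apply/le_anti/andP; split; first exact: ge_sup.
have := sup_upper_bound (conj ne (ex_intro _ 1 ub)); apply.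
by exists A; [split => //; rewrite nA | rewrite PA normr1].
Qed.
End Supp.

Section Step1.
Variables X Y : normedModType R.
Hypothesis sY : smooth_space Y.

Lemma supp_ex (y : Y) : y != 0 ->
  exists g : Y -> R, dual_elt g /\ fnorm g = 1 /\ g y = `|y|.
Proof. by move=> y0; have [_ [g [Pg _]]] := sY y0; exists g. Qed.

Lemma supp_uniq (y : Y) (g1 g2 : Y -> R) : y != 0 ->
  dual_elt g1 /\ fnorm g1 = 1 /\ g1 y = `|y| ->
  dual_elt g2 /\ fnorm g2 = 1 /\ g2 y = `|y| -> g1 = g2.
Proof.
move=> y0 P1 P2; have [_ [g [_ U]]] := sY y0.
by rewrite -(U _ P1) -(U _ P2).
Qed.

Lemma fnorm_ge0 (V : normedModType R) (g : V -> R) : dual_elt g -> 0 <= fnorm g.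
Proof.
move=> dg; apply: le_trans (normr_ge0 (g 0)) _; apply: dual_le1 => //.
by rewrite normr0.
Qed.

Lemma rank1c (C : X -> Y) (h : Y -> R) (y : Y) :
  compact_op C -> dual_elt h -> compact_op (fun x => h (C x) *: y).
Proof.
move=> cC dh; apply: (@rank1_compact _ _ _ _ (fnorm h * opnorm C)).
  by move=> a u v; rewrite cC.1 dh.1.
move=> x x1; apply: le_trans (dual_le _ dh) _.
by rewrite ler_wpM2l ?fnorm_ge0 // op_le1.
Qed.

Lemma step1 (A : X -> Y) (u u' : X) :
  compact_op A -> smooth_point_K A -> opnorm A = 1 ->
  `|u| = 1 -> `|u'| = 1 -> `|A u| = 1 -> `|A u'| = 1 ->
  exists s : R, (s = 1 \/ s = -1) /\
    forall C : X -> Y, compact_op C -> C u = s *: C u'.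
Proof.
move=> cA [_ [_ [_ smA]]] nA u1 u'1 Au1 Au'1.
have Au0 : A u != 0 by rewrite -normr_eq0 Au1 oner_eq0.
have Au'0 : A u' != 0 by rewrite -normr_eq0 Au'1 oner_eq0.
have [g1 [dg1 [ng1 g1u]]] := supp_ex Au0.
have [g2 [dg2 [ng2 g2u]]] := supp_ex Au'0.
have supp : forall (g : Y -> R) (w : X), dual_elt g -> fnorm g = 1 -> `|w| = 1 ->
    g (A w) = 1 -> K_support A (fun B => g (B w)).
  move=> g w dg ng w1 gw; apply: mk_support => //.
    by move=> a A1 B1 cA1 cB1; rewrite dg.1.
  move=> B cB; apply: le_trans (dual_le _ dg) _.
  by rewrite ng mul1r -[leRHS]mulr1 -w1 op_le.
have E : forall B, compact_op B -> g1 (B u) = g2 (B u').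
  apply: smA; apply: supp => //; by [rewrite g1u | rewrite g2u].
set al := g1 (A u'); set be := g2 (A u).
have E1 : forall y, g1 y = al * g2 y.
  move=> y; have := E _ (rank1c y cA dg1).
  by rewrite /= !(dlZ dg1.1) !(dlZ dg2.1) g1u Au1 mul1r.
have E2 : forall y, be * g1 y = g2 y.
  move=> y; have := E _ (rank1c y cA dg2).
  by rewrite /= !(dlZ dg1.1) !(dlZ dg2.1) g2u Au'1 mul1r.
have ab : al * be = 1.
  by have := E1 (A u); rewrite -E2 g1u Au1 !mulr1 => /esym.
have al1 : `|al| <= 1.
  by apply: le_trans (dual_le _ dg1) _; rewrite ng1 Au'1 mulr1.
have be1 : `|be| <= 1.
  by apply: le_trans (dual_le _ dg2) _; rewrite ng2 Au1 mulr1.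
have nal : `|al| = 1.
  apply/le_anti; rewrite al1 /=.
  have : `|al * be| = 1 by rewrite ab normr1.
  rewrite normrM => H; rewrite -H -[leRHS]mulr1 ler_wpM2l //.
have [eal ebe] : (al = 1 \/ al = -1) /\ be = al.
  move/eqP: nal; rewrite eqr_norml => /andP [/orP [/eqP e|/eqP e] _].
    by split; [left|]; move: ab; rewrite e mul1r.
  by split; [right|]; move: ab; rewrite e mulN1r => /eqP; rewrite eqr_oppLR => /eqP.
exists al; split => // C cC.
have [w0|wn0] := eqVneq (C u - al *: C u') 0.
  by apply/eqP; rewrite -subr_eq0 w0.
have [h [dh [nh hw]]] := supp_ex wn0.
have := E _ (rank1c (A u) cC dh).
rewrite /= (dlZ dg1.1) (dlZ dg2.1) g1u Au1 mulr1 -/be ebe => H.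
have : h (C u - al *: C u') = 0.
  by rewrite (dlB dh.1) (dlZ dh.1) H mulrC subrr.
by rewrite hw => /eqP; rewrite normr_eq0 (negbTE wn0).
Qed.
End Step1.

Definition ee (n : nat) : R := (n.+1%:R * 8)^-1.

Lemma ee_gt0 n : 0 < ee n.
Proof. by rewrite /ee invr_gt0 mulr_gt0 // ltr0n. Qed.

Lemma ee_le8 n : ee n <= 8^-1.
Proof.
rewrite /ee lef_pV2 ?posrE ?mulr_gt0 ?ltr0n //; apply: ler_peMl => //.
by rewrite ler1n.
Qed.

Lemma le_ee0 (a K : R) : (forall n, a <= K * ee n) -> a <= 0.
Proof.
move=> H; case: (leP K 0) => K0.
  apply: le_trans (H 0%N) _; apply: mulr_le0_ge0 => //; exact: ltW (ee_gt0 _).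
rewrite leNgt; apply/negP => a0.
have r0 : 0 < a / K by rewrite divr_gt0.
set N := Num.Def.trunc ((a / K)^-1).
have := truncnS_gt ((a / K)^-1); rewrite -/N => HN.
have := H N; rewrite /ee => HaN.
have : a <= K * (N.+1%:R)^-1.
  apply: le_trans HaN _; apply: ler_wpM2l; first exact: ltW.
  rewrite lef_pV2 ?posrE ?mulr_gt0 ?ltr0n //.
  by apply: ler_peMr => //; rewrite ?ler0n // ?ler1n //.
rewrite ler_pdivlMr ?ltr0n // mulrC -ler_pdivlMr // -invf_div => H'.
by have := lt_le_trans HN H'; rewrite ltxx.
Qed.

Lemma ee_small (r : R) : 0 < r -> exists N, ee N < r.
Proof.
move=> r0; exists (Num.Def.trunc r^-1).
have := truncnS_gt r^-1; set N := Num.Def.trunc r^-1 => HN.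
apply: (@le_lt_trans _ _ ((N.+1%:R)^-1 : R)).
  rewrite /ee lef_pV2 ?posrE ?mulr_gt0 ?ltr0n //.
  by apply: ler_peMr => //; rewrite ?ler0n // ?ler1n //.
by rewrite -(invrK r) ltf_pV2 ?posrE ?invr_gt0 ?ltr0n.
Qed.

Lemma ee_anti n m : (n <= m)%N -> ee m <= ee n.
Proof.
move=> nm; rewrite /ee lef_pV2 ?posrE ?mulr_gt0 ?ltr0n //.
by rewrite ler_wpM2r // ler_nat.
Qed.

Fixpoint runmin (f : nat -> R) (n : nat) : R :=
  if n is m.+1 then Num.min (runmin f m) (f n) else f 0%N.

Lemma runmin_le f n : runmin f n <= f n.
Proof. by case: n => [|n] //=; rewrite ge_min lexx orbT. Qed.

Lemma runmin_dec f n m : (n <= m)%N -> runmin f m <= runmin f n.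
Proof.
elim: m => [|m IH]; first by rewrite leqn0 => /eqP ->.
rewrite leq_eqVlt => /orP [/eqP -> //|]; rewrite ltnS => /IH H.
by apply: le_trans H; rewrite /= ge_min lexx.
Qed.

Lemma runmin_pos f n : (forall k, 0 < f k) -> 0 < runmin f n.
Proof. by move=> H; elim: n => [|n IH] //=; rewrite lt_min IH H. Qed.

Section Main.
Variables (X : normedModType R) (Y : completeNormedModType R) (T : X -> Y).
Hypotheses (sY : smooth_space Y) (cT : compact_op T) (nT : opnorm T = 1).
Hypothesis hyp : forall eps : R, 0 < eps ->
     exists A : X -> Y, compact_op A /\ A <> T /\
       unif_BPB_approx eps T A /\ smooth_point_K A.

Definition Eprop (eps delta : R) := forall x x' : X, `|x| = 1 -> `|x'| = 1 ->
  1 - delta < `|T x| -> 1 - delta < `|T x'| ->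
  exists s : R, (s = 1 \/ s = -1) /\
    forall C : X -> Y, compact_op C -> `|C x - s *: C x'| <= 2 * eps * opnorm C.

Lemma nearmax_E eps : 0 < eps -> exists delta, 0 < delta /\ Eprop eps delta.
Proof.
move=> e0; have [A [cA [_ [[_ [_ [nA [delta [d0 Hd]]]]] smA]]]] := hyp e0.
exists delta; split => // x x' x1 x'1 hx hx'.
have [u [u1 [Au1 [ux _]]]] := Hd x x1 hx.
have [u' [u'1 [Au'1 [ux' _]]]] := Hd x' x'1 hx'.
have [s [s1 Hs]] := step1 sY cA smA nA u1 u'1 Au1 Au'1.
exists s; split => // C cC.
have -> : C x - s *: C x' = (C x - C u) + s *: (C u' - C x').
  by rewrite scalerBr -(Hs C cC) addrA subrK.
have ns : `|s| = 1 by case: s1 => ->; rewrite ?normrN normr1.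
have oC := opnorm_ge0 cC.
apply: le_trans (ler_normD _ _) _; rewrite normrZ ns mul1r -!(linB cC.1).
have -> : 2 * eps * opnorm C = opnorm C * eps + opnorm C * eps.
  by ring.
apply: lerD; apply: le_trans (op_le _ cC) _; apply: ler_wpM2l => //.
  by rewrite distrC ltW.
by apply: ltW.
Qed.

Lemma Eprop_mono eps d1 d2 : Eprop eps d1 -> d2 <= d1 -> Eprop eps d2.
Proof.
move=> E d21 x x' x1 x'1 hx hx'; apply: E => //.
  by apply: le_lt_trans hx; rewrite lerB.
by apply: le_lt_trans hx'; rewrite lerB.
Qed.

Lemma exists_nearmax delta : 0 < delta -> delta <= 1 ->
  exists x : X, `|x| = 1 /\ 1 - delta < `|T x|.
Proof.
move=> d0 d1.
have [_ [x x1 <-] hx] := sup_adherent d0 (op_hassup cT).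
rewrite -/(opnorm T) nT in hx.
have Tx0 : 0 < `|T x| by apply: le_lt_trans hx; rewrite subr_ge0.
have x0 : x != 0.
  by apply/eqP => x0; move: Tx0; rewrite x0 (lin0 cT.1) normr0 ltxx.
have nx : 0 < `|x| by rewrite normr_gt0.
exists (`|x|^-1 *: x); split; first by rewrite normrZ normfV normr_id mulVf ?gt_eqF.
rewrite (linZ cT.1) normrZ normfV normr_id.
apply: lt_le_trans hx _; rewrite ler_peMl //.
by rewrite invf_ge1.
Qed.

Lemma Tle1 x : `|x| <= 1 -> `|T x| <= 1.
Proof. by move=> x1; rewrite -nT; apply: op_le1. Qed.

Lemma id2a (a b : Y) : (a + b) - (a - b) = 2 *: b.
Proof. by rewrite opprB addrC addrA subrK scaler_nat mulr2n. Qed.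

Lemma id2b (a b c : Y) : (a + b) - (a - c) - (b - c) = 2 *: c.
Proof.
have -> : (a + b) - (a - c) = b + c by rewrite opprB addrC addrA subrK addrC.
exact: id2a.
Qed.

Section Seq.
Variables (d : nat -> R) (z : nat -> X).
Hypotheses (d0 : forall n, 0 < d n) (d8 : forall n, d n <= 8^-1)
  (de : forall n, d n <= 8 * ee n)
  (ddec : forall n m, (n <= m)%N -> d m <= d n) (dE : forall n, Eprop (ee n) (d n))
  (zu : forall n, `|z n| = 1) (zT : forall n, 1 - d n < `|T (z n)|).

Definition v n := if `|T (z n) - T (z 0)| < 1 then z n else - z n.

Lemma v_unit n : `|v n| = 1.
Proof. by rewrite /v; case: ifP; rewrite ?normrN zu. Qed.

Lemma v_T n : 1 - d n < `|T (v n)|.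
Proof. by rewrite /v; case: ifP => _; rewrite ?(linN cT.1) ?normrN zT. Qed.

Lemma v_Tm n m : (n <= m)%N -> 1 - d n < `|T (v m)|.
Proof. by move=> nm; apply: le_lt_trans (v_T m); rewrite lerB // ddec. Qed.

Lemma ee0 : 2 * ee 0 = 4^-1.
Proof. by rewrite /ee mul1r; field; rewrite ?pnatr_eq0. Qed.

Lemma anchor n : `|T (v n) - T (z 0)| <= 4^-1.
Proof.
have h1 : 1 - d 0 < `|T (z n)|.
  by apply: le_lt_trans (zT n); rewrite lerB // ddec.
have [s [s1 Hs]] := dE (zu n) (zu 0) h1 (zT 0).
have HT := Hs T cT; rewrite nT mulr1 ee0 in HT.
have z0 := zT 0; have d08 := d8 0.
case: s1 => es; rewrite es in HT.
  rewrite scale1r in HT.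
  by rewrite /v ifT //; apply: le_lt_trans HT _; lra.
rewrite scaleN1r opprK in HT.
have tri := ler_normB (T (z n) + T (z 0)) (T (z n) - T (z 0)).
rewrite id2a normrZ ger0_norm // in tri.
rewrite /v ifF; last by apply/negbTE; rewrite -leNgt; lra.
by rewrite (linN cT.1) -opprD normrN.
Qed.

Lemma vcauchy n m : (n <= m)%N -> forall C : X -> Y, compact_op C ->
  `|C (v m) - C (v n)| <= 2 * ee n * opnorm C.
Proof.
move=> nm C cC.
have [s [s1 Hs]] := dE (v_unit m) (v_unit n) (v_Tm nm) (v_T n).
case: s1 => es; rewrite es in Hs; first by have := Hs C cC; rewrite scale1r.
exfalso.
have HT := Hs T cT; rewrite nT mulr1 scaleN1r opprK in HT.
have e8 := ee_le8 n; have am := anchor m; have an := anchor n.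
have z0 := zT 0; have d08 := d8 0.
have tri := ler_normB (T (v m) + T (v n) - (T (v m) - T (z 0))) (T (v n) - T (z 0)).
rewrite id2b normrZ ger0_norm // in tri.
have tri2 := ler_normB (T (v m) + T (v n)) (T (v m) - T (z 0)).
lra.
Qed.


Definition L (C : X -> Y) : Y := lim ((fun n => C (v n)) @ \oo).

Lemma L_cvg C : compact_op C -> (fun n => C (v n)) @ \oo --> L C.
Proof.
move=> cC; apply/cauchy_cvgP; apply/cauchy_exP => eps e0.
have oC := opnorm_ge0 cC.
have r0 : 0 < eps / (2 * (opnorm C + 1)).
  by rewrite divr_gt0 // mulr_gt0 // ltr_wpDl.
have [N HN] := ee_small r0.
exists (C (v N)); exists N => // m /= Nm.
rewrite -ball_normE /ball_ /= distrC.
apply: le_lt_trans (vcauchy Nm cC) _.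
have : 2 * ee N * (opnorm C + 1) < eps.
  have -> : 2 * ee N * (opnorm C + 1) = ee N * (2 * (opnorm C + 1)) by ring.
  by rewrite -ltr_pdivlMr // mulr_gt0 // ltr_wpDl.
apply: le_lt_trans; rewrite ler_wpM2l ?mulr_ge0 ?ltW ?ee_gt0 //.
by rewrite ltrDl.
Qed.

Lemma L_bnd C n : compact_op C -> `|C (v n) - L C| <= 2 * ee n * opnorm C.
Proof.
move=> cC.
apply: (closed_cvg _ (@closed_closed_ball_ R Y (C (v n)) (2 * ee n * opnorm C)) _ _ (L_cvg cC)).
exists n => // m /= nm; rewrite /closed_ball_ /= distrC.
exact: vcauchy.
Qed.

Lemma L_eq C y K : compact_op C -> (forall n, `|C (v n) - y| <= K * ee n) -> L C = y.
Proof.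
move=> cC H; apply/eqP; rewrite -subr_eq0 -normr_le0.
apply: (@le_ee0 _ (2 * opnorm C + K)) => n.
have -> : L C - y = (C (v n) - y) - (C (v n) - L C) by rewrite opprB (addrC (C (v n) - y)) addrA subrK.
apply: le_trans (ler_normB _ _) _.
rewrite mulrDl [_ + K * _]addrC; apply: lerD; first exact: H.
by rewrite mulrAC; apply: L_bnd.
Qed.

Lemma L_lin a A B : compact_op A -> compact_op B ->
  L (fun x => a *: A x + B x) = a *: L A + L B.
Proof.
move=> cA cB; apply: (@L_eq _ _ (`|a| * (2 * opnorm A) + 2 * opnorm B)).
  exact: sum_compact.
move=> n.
have -> : a *: A (v n) + B (v n) - (a *: L A + L B) =
   a *: (A (v n) - L A) + (B (v n) - L B).
  by rewrite opprD addrACA scalerBr.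
apply: le_trans (ler_normD _ _) _; rewrite normrZ mulrDl.
apply: lerD; last by rewrite mulrAC; apply: L_bnd.
rewrite -mulrA ler_wpM2l //.
by rewrite mulrAC; apply: L_bnd.
Qed.

Lemma L_r1 C (h : Y -> R) y : compact_op C -> dual_elt h ->
  L (fun x => h (C x) *: y) = h (L C) *: y.
Proof.
move=> cC dh; apply: (@L_eq _ _ (fnorm h * (2 * opnorm C) * `|y|)).
  exact: rank1c.
move=> n; rewrite -scalerBl normrZ -(dlB dh.1).
rewrite mulrAC; apply: ler_wpM2r => //.
apply: le_trans (dual_le _ dh) _.
rewrite -mulrA; apply: ler_wpM2l; first exact: fnorm_ge0.
by rewrite mulrAC; apply: L_bnd.
Qed.

Lemma L_norm C : compact_op C -> `|L C| <= opnorm C.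
Proof.
move=> cC; rewrite -subr_le0; apply: (@le_ee0 _ (2 * opnorm C)) => n.
apply: le_trans (_ : `|L C| - `|C (v n)| <= _).
  rewrite lerB //; apply: le_trans (op_le _ cC) _; by rewrite v_unit mulr1.
apply: le_trans (lerB_dist _ _) _; rewrite distrC.
by rewrite mulrAC; apply: L_bnd.
Qed.

Lemma LT_norm : `|L T| = 1.
Proof.
apply/le_anti; rewrite -{1}nT L_norm //=.
rewrite -subr_le0; apply: (@le_ee0 _ 10) => n.
have h1 := v_T n; have h2 := L_bnd n cT; rewrite nT mulr1 in h2.
have h3 := lerB_dist (T (v n)) (L T).
have h4 := de n.
lra.
Qed.

Lemma Zle (Phi : (X -> Y) -> R) (C : X -> Y) :
  K_support T Phi -> compact_op C -> L C = 0 -> Phi C <= 0.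
Proof.
move=> [[lin bnd] [n1 PT]] cC LC0; rewrite nT in PT.
set c := opnorm C; have c0 : 0 <= c := opnorm_ge0 cC.
apply: (@le_ee0 _ (4 * c)) => n.
set t := d n / (c + 1).
have c10 : 0 < c + 1 by rewrite ltr_wpDl.
have t0 : 0 < t by rewrite divr_gt0.
have tc : t * c <= d n.
  rewrite /t mulrAC ler_pdivrMr //; apply: ler_wpM2l; first exact: ltW.
  by rewrite lerDl.
set D := fun x => t *: C x + T x.
have cD : compact_op D by exact: sum_compact.
have e0 := ee_gt0 n.
have hD : opnorm D <= 1 + t * (4 * c * ee n).
  apply: opnorm_le => x x1; rewrite /D.
  apply: le_trans (ler_normD _ _) _; rewrite normrZ (gtr0_norm t0).
  have Cx := op_le x cC; rewrite -/c in Cx.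
  have hc : 0 <= t * (4 * c * ee n) by apply: mulr_ge0; [exact: ltW | apply: mulr_ge0; [apply: mulr_ge0 | exact: ltW]].
  case: (leP `|T x| (1 - d n)) => hx.
    have : t * `|C x| <= t * c.
      apply: ler_wpM2l; first exact: ltW.
      by apply: le_trans Cx _; apply: ler_piMr.
    lra.
  have Tx1 := Tle1 x1.
  have x0 : x != 0.
    apply/eqP => x0; move: hx; rewrite x0 (lin0 cT.1) normr0.
    have := d8 n; lra.
  have nx : 0 < `|x| by rewrite normr_gt0.
  set u := `|x|^-1 *: x.
  have u1 : `|u| = 1 by rewrite normrZ normfV normr_id mulVf ?gt_eqF.
  have hu : 1 - d n < `|T u|.
    rewrite /u (linZ cT.1) normrZ normfV normr_id.
    apply: lt_le_trans hx _; rewrite ler_peMl //.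
    by rewrite invf_ge1.
  have [s [s1 Hs]] := dE u1 (v_unit n) hu (v_T n).
  have H1 := Hs C cC; rewrite -/c in H1.
  have H2 := L_bnd n cC; rewrite LC0 subr0 -/c in H2.
  have ns : `|s| = 1 by case: s1 => ->; rewrite ?normrN normr1.
  have H3 : `|C u| <= 4 * c * ee n.
    have -> : C u = (C u - s *: C (v n)) + s *: C (v n) by rewrite subrK.
    apply: le_trans (ler_normD _ _) _; rewrite normrZ ns mul1r.
    have -> : 4 * c * ee n = 2 * ee n * c + 2 * ee n * c by ring.
    exact: lerD.
  have H4 : `|C x| <= `|C u|.
    have -> : x = `|x| *: u by rewrite /u scalerA divff ?gt_eqF // scale1r.
    by rewrite (linZ cC.1) normrZ normr_id ler_piMl.
  have : t * `|C x| <= t * (4 * c * ee n).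
    apply: ler_wpM2l; first exact: ltW.
    exact: le_trans H4 H3.
  lra.
have HPD : Phi D = t * Phi C + 1 by rewrite /D lin // PT.
have : Phi D <= 1 + t * (4 * c * ee n).
  apply: le_trans (ler_norm _) _.
  exact: le_trans (Phi_le (conj lin bnd) n1 cD) hD.
by rewrite HPD addrC lerD2l ler_pM2l.
Qed.

Lemma Zeq (Phi : (X -> Y) -> R) (C : X -> Y) :
  K_support T Phi -> compact_op C -> L C = 0 -> Phi C = 0.
Proof.
move=> sP cC LC0; apply/le_anti; rewrite Zle //=.
have cC' : compact_op (fun x => (-2) *: C x + C x) by exact: sum_compact.
have := Zle sP cC'; rewrite L_lin // LC0 scaler0 addr0 => /(_ erefl).
by rewrite sP.1.1 // => H; lra.
Qed.

Lemma LT0 : L T != 0.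
Proof. by rewrite -normr_eq0 LT_norm oner_eq0. Qed.

Lemma sup_form (g : Y -> R) (Phi : (X -> Y) -> R) :
  dual_elt g /\ fnorm g = 1 /\ g (L T) = `|L T| ->
  K_support T Phi -> forall B, compact_op B -> Phi B = g (L B).
Proof.
move=> Pg sP B cB; have [dg [ng gL]] := Pg; rewrite LT_norm in gL.
have [[lin bnd] [n1 PT]] := sP; rewrite nT in PT.
set Psi := fun y => Phi (fun x => g (T x) *: y).
have cR := fun y => rank1c y cT dg.
have Lr : forall y : Y, L (fun x => g (T x) *: y) = y.
  by move=> y; rewrite L_r1 // gL scale1r.
have PP : Psi (L T) = 1.
  have cQ : compact_op (fun x => (-1) *: (g (T x) *: L T) + T x).
    exact: sum_compact.
  have := Zeq sP cQ; rewrite L_lin // Lr scaleN1r addNr => /(_ erefl).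
  rewrite lin // PT mulN1r => /eqP; rewrite addrC subr_eq0 => /eqP E.
  exact: (esym E).
have ry : forall y : Y, opnorm (fun x => g (T x) *: y) <= `|y|.
  move=> y; apply: opnorm_le => x x1; rewrite normrZ ler_piMl //.
  apply: le_trans (dual_le _ dg) _; rewrite ng mul1r; exact: Tle1.
have dPsi : dual_elt Psi.
  split.
    move=> a y y'; rewrite /Psi.
    have -> : (fun x => g (T x) *: (a *: y + y')) =
        (fun x => a *: (g (T x) *: y) + g (T x) *: y').
      by apply: funext => x; rewrite scalerDr !scalerA mulrC.
    by rewrite lin.
  exists 1 => y; rewrite mul1r; apply: le_trans (ry y).
  exact: Phi_le (conj lin bnd) n1 (cR y).
have nPsi : fnorm Psi = 1.
  apply/le_anti/andP; split.
    apply: fnorm_le => y y1; apply: le_trans y1.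
    apply: le_trans (ry y); exact: Phi_le (conj lin bnd) n1 (cR y).
  rewrite -{1}normr1 -PP; apply: dual_le1 => //; by rewrite LT_norm.
have ePsi : Psi = g.
  apply: (supp_uniq sY LT0) => //; by rewrite PP LT_norm.
have cQ : compact_op (fun x => (-1) *: (g (T x) *: L B) + B x).
  exact: sum_compact.
have := Zeq sP cQ; rewrite L_lin // Lr scaleN1r addNr => /(_ erefl).
rewrite lin // mulN1r => /eqP; rewrite addrC subr_eq0 => /eqP ->.
by rewrite -/(Psi (L B)) ePsi.
Qed.

Lemma smooth_T : smooth_point_K T.
Proof.
have [g Pg] := supp_ex sY LT0.
have [dg [ng gL]] := Pg.
split => //; split.
  move=> T0; have : opnorm T <= 0.
    by apply: opnorm_le => x _; rewrite T0 normr0.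
  by rewrite nT ler10.
split.
  exists (fun B => g (L B)); apply: mk_support => //.
  - by move=> a A1 B1 cA1 cB1; rewrite L_lin // dg.1.
  - move=> B cB; apply: le_trans (dual_le _ dg) _.
    by rewrite ng mul1r L_norm.
  - by rewrite gL LT_norm.
move=> Phi1 Phi2 s1 s2 B cB.
by rewrite (sup_form Pg s1 cB) (sup_form Pg s2 cB).
Qed.
End Seq.


Lemma final : smooth_point_K T.
Proof.
have [d1 Hd1] := choice (fun n => nearmax_E (ee_gt0 n)).
pose d2 := fun n => Num.min (d1 n) (Num.min (8^-1) (8 * ee n)).
have d2p : forall n, 0 < d2 n.
  move=> n; rewrite /d2 !lt_min (Hd1 n).1 /= mulr_gt0 ?ee_gt0 //.
  by rewrite andbT invr_gt0.
pose d := runmin d2.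
have d0 : forall n, 0 < d n by move=> n; apply: runmin_pos.
have dd2 : forall n, d n <= d2 n by move=> n; apply: runmin_le.
have d8 : forall n, d n <= 8^-1.
  by move=> n; apply: le_trans (dd2 n) _; rewrite /d2 !ge_min lexx orbT.
have de : forall n, d n <= 8 * ee n.
  by move=> n; apply: le_trans (dd2 n) _; rewrite /d2 !ge_min lexx !orbT.
have ddec : forall n m, (n <= m)%N -> d m <= d n by move=> n m; apply: runmin_dec.
have dE : forall n, Eprop (ee n) (d n).
  move=> n; apply: Eprop_mono (Hd1 n).2 _.
  by apply: le_trans (dd2 n) _; rewrite /d2 ge_min lexx.
have d1' : forall n, d n <= 1.
  move=> n; apply: le_trans (d8 n) _.
  by rewrite invf_le1 // ler1n.
have [z Hz] := choice (fun n => exists_nearmax (d0 n) (d1' n)).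
exact: (smooth_T d0 d8 de ddec dE (fun n => (Hz n).1) (fun n => (Hz n).2)).
Qed.
End Main.
End Basic.

Unset Implicit Arguments.

Theorem proposition2p7 (R : realType) (X Y : completeNormedModType R)
  (T : X -> Y) :
  reflexive_space X -> smooth_space Y -> dim_gt1 X -> dim_gt1 Y ->
  compact_op T -> opnorm T = 1 ->
  (forall eps : R, 0 < eps ->
     exists A : X -> Y, compact_op A /\ A <> T /\
       unif_BPB_approx eps T A /\ smooth_point_K A) ->
  smooth_point_K T.
Proof.
move=> _ sY _ _ cT nT hyp.
exact: (final sY cT nT hyp).
Qed.
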